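(* Let $K$ be an admissible kernel on $X\times Y$ with constant $C_K$ and let $\mu_0$ be a Borel probability measure on $Y$. The following are equivalent: (1) the function $U_K^{\mu_0}$ is constant on $X$; (2) $U_K^{\mu_0}(x)=C_K$ for every $x\in X$; (3) $\mu_0$ minimizes $\sup_{x\in X}U_K^{\mu}(x)$ over Borel probability measures $\mu$ on $Y$, i.e. $\inf_{\mu\in\mathcal{M}(Y)}\sup_{x\in X}U_K^\mu(x)=\sup_{x\in X}U_K^{\mu_0}(x)$.
   Context: $(X,d_X)$ and $(Y,d_Y)$ are compact metric spaces and $G$ is a compact topological group acting isometrically and transitively on both $X$ and $Y$. $\mathcal{M}(Y)$ is the set of Borel probability measures on $Y$; $m_X$ and $m_Y$ denote the unique $G$-invariant Radon (Borel) probability measures on $X$ and $Y$. A Borel measurable $K:X\times Y\to\mathbb{R}\cup\{-\infty\}$ is an admissible kernel if: (i) there is $B_K\in[0,\infty)$ with $-\infty\le K(x,y)\le B_K$ for all $x,y$; (ii) $\int_X|K(x,y)|\,dm_X(x)<\infty$ for every $y\in Y$; (iii) for every $y$, $K(\cdot,y)$ is upper semi-continuous; (iv) $K(g(x),y)=K(x,g^{-1}(y))$ for all $g\in G,x\in X,y\in Y$. The constant $C_K$ is the common value of $\int_X K(x,y)\,dm_X(x)$ (independent of $y$). For $\mu\in\mathcal{M}(Y)$, $U_K^\mu(x)=\int_Y K(x,y)\,d\mu(y)$. *)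

(* Defs.v *)
From HB Require Import structures.
From mathcomp Require Import all_boot all_order all_algebra.
From mathcomp Require Import all_classical all_reals all_analysis.
From mathcomp Require Import measurable_realfun.
Set Implicit Arguments. Unset Strict Implicit. Unset Printing Implicit Defensive.
Import Order.TTheory GRing.Theory Num.Theory.
Local Open Scope classical_set_scope.
Local Open Scope ring_scope.
Local Open Scope ereal_scope.

Definition Borel (T : ptopologicalType) : Type := g_sigma_algebraType (@open T).
HB.instance Definition _ (T : ptopologicalType) := Measurable.on (Borel T).
Notation BorelOf T := (Borel T).

(* d is a metric on the pseudometric space X inducing its uniform structure
   (this is exactly the content of mathcomp-analysis' PseudoMetric_isMetric mixin;
   we use a pointed pseudometric type, i.e. X is nonempty, so that the Borel
   sigma-algebra is a measurableType) *)
Definition is_metric_of (R : realType) (X : pseudoPMetricType R) (d : X -> X -> R) :=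
  [/\ (forall x y, 0 <= d x y)%R, (forall x y, d x y = 0%R -> x = y) &
      (forall x (e : R), ball x e = [set y | (d x y < e)%R])].

Definition usc (T : topologicalType) (R : realType) (f : T -> \bar R) :=
  forall a : \bar R, open [set x | f x < a].

Definition compact_topological_group (G : topologicalType)
  (mul : G -> G -> G) (inv : G -> G) (one : G) : Prop :=
  [/\ (forall a b c, mul a (mul b c) = mul (mul a b) c),
      (forall a, mul one a = a /\ mul a one = a),
      (forall a, mul (inv a) a = one /\ mul a (inv a) = one),
      continuous (fun p : G * G => mul p.1 p.2) &
      [/\ continuous inv, compact [set: G] & hausdorff_space G]].

Definition isometric_transitive_action (R : realType) (G : topologicalType)
  (mul : G -> G -> G) (one : G) (X : pseudoPMetricType R) (d : X -> X -> R)
  (act : G -> X -> X) : Prop :=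
  [/\ (forall x, act one x = x),
      (forall g h x, act (mul g h) x = act g (act h x)),
      continuous (fun p : G * X => act p.1 p.2),
      (forall g x x', d (act g x) (act g x') = d x x') &
      (forall x x', exists g, act g x = x')].

Definition G_invariant (R : realType) (G : Type) (X : pseudoPMetricType R)
  (act : G -> X -> X) (m : probability (BorelOf X) R) : Prop :=
  forall (g : G) (A : set (BorelOf X)), measurable A ->
    m (act g @^-1` A) = m A.

Definition admissible_kernel (R : realType) (G : Type) (inv : G -> G)
  (X Y : pseudoPMetricType R) (actX : G -> X -> X) (actY : G -> Y -> Y)
  (mX : probability (BorelOf X) R) (K : X -> Y -> \bar R) : Prop :=
  [/\ measurable_fun [set: BorelOf X * BorelOf Y]
        (fun p : BorelOf X * BorelOf Y => K p.1 p.2),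
      (exists BK : R, (0 <= BK)%R /\ forall x y, K x y <= BK%:E),
      (forall y, \int[mX]_(x in [set: BorelOf X]) `|K x y| < +oo),
      (forall y, usc (fun x : X => K x y)) &
      (forall g x y, K (actX g x) y = K x (actY (inv g) y))].

Definition potential (R : realType) (X Y : pseudoPMetricType R) (K : X -> Y -> \bar R)
  (mu : probability (BorelOf Y) R) (x : X) : \bar R :=
  \int[mu]_(y in [set: BorelOf Y]) K x y.

(* Main.v *)
From HB Require Import structures.
From mathcomp Require Import all_boot all_order all_algebra.
From mathcomp Require Import all_classical all_reals all_analysis.
From mathcomp Require Import measurable_realfun.
From mathcomp Require Import lra.
Require Import Defs.
Import Order.TTheory GRing.Theory Num.Theory.
Local Open Scope classical_set_scope.
Local Open Scope ring_scope.
Local Open Scope ereal_scope.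

Lemma int_cstB (R : realType) d (T : measurableType d) (P : probability T R)
  (g : T -> \bar R) (b : R) : measurable_fun setT g ->
  (forall t, g t <= b%:E) -> (0 <= b)%R ->
  \int[P]_(t in setT) (b%:E - g t) = b%:E - \int[P]_(t in setT) g t.
Proof.
move=> mg gb b0.
have pb t : g^\+ t <= b%:E.
  by rewrite funeposE ge_max gb lee_fin b0.
have pfin t : g^\+ t \is a fin_num.
  rewrite fin_numE; apply/andP; split.
    by apply/negP => /eqP h; have := funepos_ge0 g t; rewrite h.
  by apply/negP => /eqP h; have := pb t; rewrite h leNgt ltry.
have e t : b%:E - g t = (b%:E - g^\+ t) + g^\- t.
  rewrite {1}(funeposneg g) /= oppeB ?addeA //.
  exact: fin_num_adde_defr.
have mp := measurable_funepos mg.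
have mn := measurable_funeneg mg.
have mbp : measurable_fun setT (fun t => b%:E - g^\+ t).
  by apply: emeasurable_funB => //; exact: measurable_cst.
have bp0 t : 0 <= b%:E - g^\+ t by rewrite subre_ge0 // pfin.
under eq_integral do rewrite e.
rewrite ge0_integralD //; try by move=> t _; exact: funeneg_ge0.
have h1 : \int[P]_(t in setT) (b%:E - g^\+ t) + \int[P]_(t in setT) g^\+ t = b%:E.
  rewrite -ge0_integralD //; try by move=> t _; exact: funepos_ge0.
  under eq_integral do rewrite subeK //.
  by rewrite integral_cst //= (probability_setT P) mule1.
have ip0 : 0 <= \int[P]_(t in setT) g^\+ t.
  by apply: integral_ge0 => t _; exact: funepos_ge0.
have ipb : \int[P]_(t in setT) g^\+ t <= b%:E.
  rewrite -h1 leeDr //; apply: integral_ge0 => t _; exact: bp0.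
have ipfin : \int[P]_(t in setT) g^\+ t \is a fin_num.
  rewrite fin_numE; apply/andP; split.
    by apply/negP => /eqP h; move: ip0; rewrite h.
  by apply/negP => /eqP h; move: ipb; rewrite h leNgt ltry.
have -> : \int[P]_(t in setT) (b%:E - g^\+ t) = b%:E - \int[P]_(t in setT) g^\+ t.
  by rewrite -[in RHS]h1 addeK.
rewrite (integralE P setT g) oppeB ?addeA //.
exact: fin_num_adde_defr.
Qed.

Lemma ereal_dense (R : realType) (x y : \bar R) : x < y -> exists r : R, x < r%:E < y.
Proof.
case: x => [a| |]; case: y => [c| |] //=.
- rewrite lte_fin => ac; exists ((a + c) / 2)%R; rewrite !lte_fin.
  by have [h1 h2] := midf_lt ac; rewrite h1 h2.
- by move=> _; exists (a + 1)%R; rewrite !lte_fin ltry andbT; lra.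
- by move=> _; exists (c - 1)%R; rewrite !lte_fin ltNyr /=; lra.
- by move=> _; exists 0%R; rewrite ltNyr ltry.
Qed.

Lemma ltBE (R : realType) (b r : R) (k : \bar R) : k <= b%:E ->
  (r%:E < b%:E - k) = (k < (b - r)%:E).
Proof.
case: k => [s| |] //=.
- by move=> _; rewrite !lte_fin; apply/idP/idP => h; lra.
- by move=> _; rewrite ltry ltNyr.
Qed.


Section avg.
Variables (R : realType) (X Y : pseudoPMetricType R).
Variables (mX : probability (BorelOf X) R) (K : X -> Y -> \bar R) (b c : R).
Hypothesis mK : measurable_fun [set: BorelOf X * BorelOf Y]
        (fun p : BorelOf X * BorelOf Y => K p.1 p.2).
Hypothesis Kb : forall x y, K x y <= b%:E.
Hypothesis b0 : (0 <= b)%R.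
Hypothesis KC : forall y, \int[mX]_(x in [set: BorelOf X]) K x y = c%:E.

Lemma mK1 (y : Y) : measurable_fun [set: BorelOf X] (fun x : BorelOf X => K x y).
Proof.
have := measurableT_comp mK (pair2_measurable (T1:=BorelOf X) (T2:=BorelOf Y) y); exact.
Qed.

Lemma mK2 (x : X) : measurable_fun [set: BorelOf Y] (fun y : BorelOf Y => K x y).
Proof.
have := measurableT_comp mK (pair1_measurable (T1:=BorelOf X) (T2:=BorelOf Y) x); exact.
Qed.

Lemma Wpot (mu : probability (BorelOf Y) R) (x : X) :
  \int[mu]_(y in [set: BorelOf Y]) (b%:E - K x y) = b%:E - potential K mu x.
Proof. by rewrite int_cstB //; exact: mK2. Qed.

Let f := fun p : BorelOf X * BorelOf Y => b%:E - K p.1 p.2.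
Let mf : measurable_fun setT f.
Proof. by apply: emeasurable_funB => //; exact: measurable_cst. Qed.
Let f0 p : 0 <= f p.
Proof. by rewrite /f subre_ge0 ?Kb // fin_numE /= !eqxx. Qed.

Lemma measW (mu : probability (BorelOf Y) R) :
  measurable_fun [set: BorelOf X] (fun x => b%:E - potential K mu x).
Proof.
have := measurable_fun_fubini_tonelli_F (m2 := mu) f mf f0.
apply: eq_measurable_fun => x _.
by rewrite /fubini_F /f /= Wpot.
Qed.

Lemma avgW (mu : probability (BorelOf Y) R) :
  \int[mX]_(x in [set: BorelOf X]) (b%:E - potential K mu x) = (b - c)%:E.
Proof.
transitivity (\int[mX]_x \int[mu]_y f (x, y)).
  by apply: eq_integral => x _; rewrite /f /= Wpot.
rewrite (fubini_tonelli f mf f0).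
transitivity (\int[mu]_(y in [set: BorelOf Y]) (cst (b - c)%:E) y).
  apply: eq_integral => y _; rewrite /f /= int_cstB //; last exact: mK1.
  by rewrite KC.
rewrite integral_cst //; transitivity ((b - c)%:E * 1); last exact: mule1.
congr (_ * _); exact: probability_setT.
Qed.

Hypothesis uK : forall y, usc (fun x : X => K x y).

Lemma lsc (mu : probability (BorelOf Y) R) (t : R) :
  open [set x : X | t%:E < b%:E - potential K mu x].
Proof.
rewrite openE => x0 /= hx0.
apply: contrapT => nN.
have hseq : forall n : nat, exists z : X,
    ball x0 (n.+1%:R^-1)%R z /\ ~ (t%:E < b%:E - potential K mu z).
  move=> n; apply: contrapT => hn; apply: nN.
  rewrite /interior; apply/nbhs_ballP; exists (n.+1%:R^-1)%R => /=.
    by rewrite invr_gt0 ltr0n.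
  move=> z bz; apply: contrapT => nz; apply: hn; exists z; split => //.
have [u hu] := choice hseq.
pose h n (y : BorelOf Y) := b%:E - K (u n) y.
have mh n : measurable_fun setT (h n).
  by apply: emeasurable_funB => //; exact: mK2.
have h0 n y : 0 <= h n y by rewrite /h subre_ge0 ?Kb // fin_numE /= !eqxx.
have hfat := @fatou _ _ _ mu setT measurableT h (fun n => mh n) (fun n y _ => h0 n y).
have hle : limn_einf (fun n => \int[mu]_(y in setT) h n y) <= t%:E.
  rewrite limn_einf_lim; apply: lime_le; first exact: is_cvg_einfs.
  apply: nearW => n.
  apply: ge_ereal_inf; exists (\int[mu]_(y in setT) h n y); first by exists n => /=.
  rewrite /h Wpot; have := (hu n).2; move/negP; rewrite -leNgt; exact.
have hpt y : b%:E - K x0 y <= limn_einf (h ^~ y).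
  apply/negP => /negP; rewrite -ltNge => /ereal_dense [r /andP [h1 h2]].
  have hK : K x0 y < (b - r)%:E by rewrite -ltBE.
  have : nbhs x0 [set x | K x y < (b - r)%:E].
    by apply: open_nbhs_nbhs; split => //; exact: uK.
  move/nbhs_ballP => [e /= e0 be].
  have [N _ hN] := near_infty_natSinv_lt (PosNum e0).
  have : r%:E <= limn_einf (h ^~ y).
    rewrite limn_einf_lim; apply: lime_ge; first exact: is_cvg_einfs.
    exists N => // M /= NM.
    apply: le_ereal_inf_tmp => _ [k /= Mk <-].
    rewrite /h ltW // ltBE ?Kb //.
    apply: be; apply: le_ball (hu k).1.
    apply: ltW; apply: hN => /=; exact: leq_trans NM Mk.
  by rewrite leNgt h1.
have : b%:E - potential K mu x0 <= t%:E.
  rewrite -Wpot; apply: le_trans hle; apply: le_trans hfat.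
  apply: ge0_le_integral => //.
  - by move=> y _; rewrite subre_ge0 ?Kb // fin_numE /= !eqxx.
  - by apply: emeasurable_funB => //; exact: mK2.
  - have hm := measurable_fun_limn_esup
      (fun n => measurableT_comp (@oppe_measurable R setT) (mh n)).
    exact: (measurableT_comp (@oppe_measurable R setT) hm).
by move/(lt_le_trans hx0); rewrite ltxx.
Qed.
End avg.
Lemma openM (X : ptopologicalType) (O : set X) : open O -> measurable (O : set (BorelOf X)).
Proof. move=> oO. exact: sub_gen_smallest. Qed.

Section support.
Variables (R : realType) (X : pseudoPMetricType R) (G : topologicalType).
Variables (actX : G -> X -> X) (mX : probability (BorelOf X) R).
Hypothesis cX : compact [set: X].
Hypothesis hc : continuous (fun p : G * X => actX p.1 p.2).
Hypothesis htr : forall x x', exists g, actX g x = x'.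
Hypothesis hinv : G_invariant actX mX.

Lemma act_cont g : continuous (actX g).
Proof.
move=> x.
apply: (continuous_comp (f := fun x => (g, x)) (g := fun p : G * X => actX p.1 p.2)).
- by apply: cvg_pair; [exact: cvg_cst | exact: cvg_id].
- exact: hc.
Qed.

Lemma full_support (O : set X) : open O -> O !=set0 -> 0 < mX O.
Proof.
move=> oO [x0 Ox0].
have mO : measurable (O : set (BorelOf X)) by exact: openM.
have oF g : open (actX g @^-1` O).
  by apply: open_comp => // y _; exact: act_cont.
have mF g : measurable (actX g @^-1` O : set (BorelOf X)) by exact: openM.
rewrite lt0e measure_ge0 andbT; apply/negP => /eqP O0.
move: cX; rewrite compact_cover => /(_ G setT (fun g => actX g @^-1` O)) [].
- by move=> g _; exact: oF.
- move=> x _; have [g hg] := htr x x0; exists g => //.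
  by rewrite /preimage /= hg.
move=> D' _ cov.
have h s : mX (\big[setU/set0]_(g <- s) (actX g @^-1` O) : set (BorelOf X)) = 0.
  elim: s => [|g s IH]; first by rewrite big_nil measure0.
  rewrite big_cons measureU0 //; last exact: bigsetU_measurable.
  by transitivity (mX O); [exact: hinv|exact: O0].
have : mX [set: BorelOf X] <= 0.
  rewrite -(h (finmap.enum_fset D')) -bigcup_fset.
  apply: le_measure.
  - by rewrite inE.
  - by rewrite inE bigcup_fset; exact: bigsetU_measurable.
  - exact: cov.
by rewrite probability_setT lee_fin ler10.
Qed.
End support.

Lemma mulP1 (R : realType) d (T : measurableType d) (P : probability T R) (a : \bar R) :
  a * P setT = a.
Proof.
by transitivity (a * 1); [congr (_ * _); exact: probability_setT|exact: mule1].
Qed.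

Lemma leBE' (R : realType) (b r : R) (k : \bar R) : k <= b%:E -> k <= r%:E ->
  (b - r)%:E <= b%:E - k.
Proof.
case: k => [s| |] //=; last by move=> _ _; rewrite leey.
by rewrite !lee_fin => h1 h2; lra.
Qed.

Lemma ltBE2 (R : realType) (b r : R) (k : \bar R) : k <= b%:E -> k < r%:E ->
  (b - r)%:E < b%:E - k.
Proof.
case: k => [s| |] //=; last by move=> _ _; rewrite ltry.
by rewrite !lte_fin lee_fin => h1 h2; lra.
Qed.

Lemma ge0BE (R : realType) (b : R) (k : \bar R) : 0 <= b%:E - k -> k <= b%:E.
Proof.
case: k => [s| |] //=; try (rewrite !lee_fin => h; lra); by rewrite ?leNye ?leey.
Qed.

Lemma subKE (R : realType) (b : R) (p q : \bar R) : b%:E - p = b%:E - q -> p = q.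
Proof.
case: p => [s| |]; case: q => [s'| |] //=.
by move=> [] h; congr EFin; lra.
Qed.

Lemma sup_const (R : realType) (X : pointedType) (f : X -> \bar R) (a : \bar R) :
  (forall x, f x = a) -> ereal_sup (range f) = a.
Proof.
move=> hf; apply/eqP; rewrite eq_le; apply/andP; split.
  by apply: ge_ereal_sup => _ [x _ <-]; rewrite hf.
apply: le_ereal_sup_tmp; exists a => //; exists point => //.
Qed.

Theorem theorem4p7 (R : realType) (X Y : pseudoPMetricType R)
  (dX : X -> X -> R) (dY : Y -> Y -> R) (G : topologicalType)
  (mul : G -> G -> G) (inv : G -> G) (one : G)
  (actX : G -> X -> X) (actY : G -> Y -> Y)
  (mX : probability (BorelOf X) R) (mY : probability (BorelOf Y) R)
  (K : X -> Y -> \bar R) (CK : \bar R) (mu0 : probability (BorelOf Y) R) :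
  is_metric_of dX -> is_metric_of dY ->
  compact [set: X] -> compact [set: Y] ->
  compact_topological_group mul inv one ->
  isometric_transitive_action mul one dX actX ->
  isometric_transitive_action mul one dY actY ->
  G_invariant actX mX -> G_invariant actY mY ->
  admissible_kernel inv actX actY mX K ->
  (forall y : Y, \int[mX]_(x in [set: BorelOf X]) K x y = CK) ->
  ((exists c : \bar R, forall x : X, potential K mu0 x = c) <->
     (forall x : X, potential K mu0 x = CK)) /\
  ((forall x : X, potential K mu0 x = CK) <->
     ereal_inf [set ereal_sup (range (potential K mu)) |
                  mu in [set: probability (BorelOf Y) R]]
     = ereal_sup (range (potential K mu0))).
Proof.
move=> hdX hdY cX cY hG [_ _ hcX _ htrX] [_ _ hcY _ htrY] hiX hiY
  [mK [B [B0 KB]] Kint uK Kinv] hCK.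
have CKfin : CK \is a fin_num.
  rewrite -(hCK point); apply: integrable_fin_num => //.
  apply/integrableP; split; [exact: mK1 | exact: Kint].
move/EFin_fin_numP: CKfin => [c hc]; subst CK.
have hav mu := @avgW _ _ _ mX K B c mK KB B0 hCK mu.
have hWpot mu x := @Wpot _ _ _ K B mK KB B0 mu x.
have Wge0 mu x : 0 <= B%:E - potential K mu x.
  rewrite -hWpot; apply: integral_ge0 => y _.
  by rewrite subre_ge0 ?KB // fin_numE /= !eqxx.
have potle mu x : potential K mu x <= B%:E by apply: ge0BE; exact: Wge0.
have cB : (c <= B)%R.
  have := hav mu0; move=> h.
  have : 0 <= \int[mX]_(x in [set: BorelOf X]) (B%:E - potential K mu0 x).
    by apply: integral_ge0 => x _; exact: Wge0.
  by rewrite h lee_fin subr_ge0.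
have const12 mu c' : (forall x, potential K mu x = c') -> c' = c%:E.
  move=> hc'.
  have : \int[mX]_(x in [set: BorelOf X]) (cst (B%:E - c')) x = (B - c)%:E.
    by rewrite -(hav mu); apply: eq_integral => x _; rewrite /= hc'.
  rewrite integral_cst //.
  rewrite mulP1; case: c' {hc'} => [s| |] //=.
  by move=> [] h; congr EFin; lra.
have lower mu : c%:E <= ereal_sup (range (potential K mu)).
  rewrite leNgt; apply/negP => /ereal_dense [r /andP [h1 h2]].
  have hle : \int[mX]_(x in [set: BorelOf X]) (cst (B - r)%:E) x <=
             \int[mX]_(x in [set: BorelOf X]) (B%:E - potential K mu x).
    apply: ge0_le_integral => //.
    - by move=> x _; rewrite lee_fin subr_ge0; move: h2; rewrite lte_fin => h2; lra.
    - exact: (@measW _ _ _ K B mK KB B0 mu).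
    - move=> x _; apply: leBE' => //; apply: le_trans (ltW h1).
      by apply: ereal_sup_ubound; exists x.
  move: hle; rewrite hav integral_cst // mulP1 lee_fin; move: h2; rewrite lte_fin => h2 h3; lra.
(* the invariant measure has constant potential *)
have Winv g x : B%:E - potential K mY (actX g x) = B%:E - potential K mY x.
  rewrite -!hWpot.
  under eq_integral do rewrite Kinv.
  pose phi : BorelOf Y -> BorelOf Y := actY (inv g).
  have mphi : measurable_fun [set: BorelOf Y] phi.
    apply: (@measurability _ _ _ _ setT phi (@open Y)) => //.
    move=> _ [A oA <-]; rewrite setTI; apply: openM.
    by apply: open_comp => // y _; exact: act_cont.
  have hp := @ge0_integral_pushforward _ _ _ _ R phi mphi mY setT
    (fun y => B%:E - K x y) measurableT
    (emeasurable_funB (measurable_cst _) (@mK2 _ _ _ K mK x))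
    (fun y _ => ltac:(by rewrite /= subre_ge0 ?KB // fin_numE /= !eqxx)).
  rewrite preimage_setT in hp.
  rewrite -hp; apply: eq_measure_integral => A mA _.
  exact: hiY.
have hconst x : potential K mY x = potential K mY point.
  have [g hg] := htrX point x; rewrite -hg.
  by apply: (@subKE _ B); exact: Winv.
have pmY x : potential K mY x = c%:E.
  by rewrite hconst; apply: (const12 mY); exact: hconst.
have supmY : ereal_sup (range (potential K mY)) = c%:E by exact: (@sup_const R _ _ _ pmY).
split.
  split; last by move=> h; exists c%:E.
  move=> [c' hc'] x; rewrite hc'; exact: (const12 mu0).
split.
  move=> h2.
  rewrite (@sup_const R _ _ _ h2).
  apply/eqP; rewrite eq_le; apply/andP; split.
    apply: ge_ereal_inf; exists (ereal_sup (range (potential K mY))).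
      by exists mY.
    by rewrite supmY.
  by apply: le_ereal_inf_tmp => _ [mu _ <-]; exact: lower.
move=> h3.
have hinf : ereal_inf [set ereal_sup (range (potential K mu)) |
                  mu in [set: probability (BorelOf Y) R]] = c%:E.
  apply/eqP; rewrite eq_le; apply/andP; split.
    apply: ge_ereal_inf; exists (ereal_sup (range (potential K mY))).
      by exists mY.
    by rewrite supmY.
  by apply: le_ereal_inf_tmp => _ [mu _ <-]; exact: lower.
rewrite hinf in h3.
have potle0 x : potential K mu0 x <= c%:E.
  by rewrite h3; apply: ereal_sup_ubound; exists x.
move=> x; apply/eqP; rewrite eq_le potle0 /= leNgt; apply/negP => hlt.
have hW : (B - c)%:E < B%:E - potential K mu0 x by exact: ltBE2.
have [t /andP [t1 t2]] := @ereal_dense R _ _ hW.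
pose O := [set z : X | t%:E < B%:E - potential K mu0 z].
have oO : open O by exact: (@lsc _ _ _ K B mK KB B0 uK mu0 t).
have mO : measurable (O : set (BorelOf X)) by exact: openM.
have pO : 0 < mX O.
  by apply: (@full_support R X G actX mX cX hcX htrX hiX O oO); exists x.
pose k := (t - (B - c))%R.
have k0 : (0 < k)%R by move: t1; rewrite lte_fin /k subr_gt0.
have eqI : \int[mX]_(z in [set: BorelOf X]) ((B - c)%:E + k%:E * (\1_O z)%:E)
    = (B - c)%:E + k%:E * mX O.
  rewrite ge0_integralD //; first rewrite integral_cst // mulP1 ge0_integralZl_EFin ?ltW //.
  - by rewrite integral_indic // setIT.
  - by apply/measurable_EFinP; exact: measurable_indic.
  - by move=> z _; rewrite lee_fin subr_ge0.
  - by move=> z _; rewrite mule_ge0 // lee_fin ?ltW.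
  - apply: emeasurable_funM => //.
    by apply/measurable_EFinP; exact: measurable_indic.
have : (B - c)%:E + k%:E * mX O <= (B - c)%:E.
  rewrite -eqI -[X in _ <= X](hav mu0).
  apply: ge0_le_integral => //.
  - move=> z _; apply: adde_ge0; first by rewrite lee_fin subr_ge0.
    by apply: mule_ge0; rewrite lee_fin; [exact: ltW | rewrite indicE; case: (_ \in _)].
  - apply: emeasurable_funD => //.
    apply: emeasurable_funM => //.
    by apply/measurable_EFinP; exact: measurable_indic.
  - exact: (@measW _ _ _ K B mK KB B0 mu0).
  - move=> z _; rewrite indicE; case: (boolP (z \in O)) => [/set_mem Oz|nOz] /=.
      by rewrite mule1 -EFinD /k addrC subrK; exact: ltW.
    by rewrite mule0 adde0; apply: leBE'.
by rewrite leNgt lteDl // mule_gt0 // lte_fin.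
Qed.
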